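(* Let $N>1$ and let the parameter space $\Theta$ of the correlated Bernoulli random graph model be nondegenerate. Then there does not exist an unbiased estimator of the total correlation $\varrho_T$, i.e. there is no statistic $S:\mathcal{X}\to\mathbb{R}$ with $\mathbb{E}_\theta(S)=\varrho_T(\theta)$ for all $\theta\in\Theta$.
   Context: Correlated Bernoulli random graph model: fix a positive integer $N$ and let $\mathcal{R}=\{(p_1,\dots,p_N,\varrho_1,\dots,\varrho_N): p_i,\varrho_i\in[0,1]\}$; a parameter space is any $\Theta\subseteq\mathcal{R}$. For $\theta\in\Theta$, the pairs $(X_i,Y_i)$, $i=1,\dots,N$, of $\{0,1\}$-valued random variables are independent, $X_i,Y_i$ are marginally Bernoulli$(p_i)$ with Pearson correlation $\varrho_i$ (so $\mathbb{P}(X_i=Y_i=1)=p_i^2+\varrho_ip_i(1-p_i)$, $\mathbb{P}(X_i=Y_i=0)=(1-p_i)^2+\varrho_ip_i(1-p_i)$, $\mathbb{P}(X_i=1,Y_i=0)=\mathbb{P}(X_i=0,Y_i=1)=(1-\varrho_i)p_i(1-p_i)$). Sample space $\mathcal{X}=\{(x,y):x,y\in\{0,1\}^N\}$. Let $\mathcal{R}^o=\{(p_1,\dots,p_N,0,\dots,0):p_i\in\mathbb{R}\}$; $\Theta$ is nondegenerate if $\Theta\cap\mathcal{R}^o$ has an interior point relative to $\mathcal{R}^o$. Let $\mu=\frac1N\sum_i p_i$. The total correlation is $\varrho_T=1-\frac{\sum_{i=1}^N(1-\varrho_i)p_i(1-p_i)}{N\mu(1-\mu)}$ when $0<\mu<1$;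 when $\mu\in\{0,1\}$ it is defined by an arbitrary convention with value in $[0,1]$. *)

(* Defs.v *)
From HB Require Import structures.
From mathcomp Require Import all_boot all_order all_algebra.
From mathcomp Require Import reals.
Set Implicit Arguments. Unset Strict Implicit. Unset Printing Implicit Defensive.
Import Order.TTheory GRing.Theory Num.Theory.
Local Open Scope ring_scope.

(* A parameter theta = (p, rho) with p, rho : 'I_N -> R. *)
Definition param (R : realType) (N : nat) : Type := (('I_N -> R) * ('I_N -> R))%type.

Definition Rspace (R : realType) (N : nat) (th : param R N) : Prop :=
  forall i : 'I_N, 0 <= th.1 i <= 1 /\ 0 <= th.2 i <= 1.

(* Nondegenerate: Theta ∩ R^o has an interior point relative to
   R^o = {(p, 0) : p in R^N} (product topology, i.e. sup-norm balls). *)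
Definition nondegenerate_param (R : realType) (N : nat) (Theta : param R N -> Prop) : Prop :=
  exists (p0 : 'I_N -> R) (e : R), 0 < e /\
    forall p : 'I_N -> R, (forall i, `|p i - p0 i| < e) -> Theta (p, fun _ => 0).

Definition pair_pmf (R : realType) (p rho : R) (a b : bool) : R :=
  match a, b with
  | true, true => p ^+ 2 + rho * p * (1 - p)
  | false, false => (1 - p) ^+ 2 + rho * p * (1 - p)
  | _, _ => (1 - rho) * p * (1 - p)
  end.

Definition sample (N : nat) : finType :=
  ({ffun 'I_N -> bool} * {ffun 'I_N -> bool})%type.

Definition prob (R : realType) (N : nat) (th : param R N) (z : sample N) : R :=
  \prod_(i < N) pair_pmf (th.1 i) (th.2 i) (z.1 i) (z.2 i).

Definition expect (R : realType) (N : nat) (th : param R N) (S : sample N -> R) : R :=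
  \sum_(z : sample N) S z * prob th z.

Definition mu (R : realType) (N : nat) (th : param R N) : R :=
  (\sum_(i < N) th.1 i) / N%:R.

(* Total correlation; [conv] is the arbitrary convention used when mu ∈ {0,1}. *)
Definition total_corr (R : realType) (N : nat) (conv : param R N -> R)
  (th : param R N) : R :=
  if (0 < mu th) && (mu th < 1) then
    1 - (\sum_(i < N) (1 - th.2 i) * th.1 i * (1 - th.1 i))
          / (N%:R * mu th * (1 - mu th))
  else conv th.

(* Main.v *)
Require Import Defs.
From HB Require Import structures.
From mathcomp Require Import all_boot all_order all_algebra.
From mathcomp Require Import reals.
From mathcomp Require Import ring lra.
Set Implicit Arguments. Unset Strict Implicit.
Import Order.TTheory GRing.Theory Num.Theory.
Local Open Scope ring_scope.

Definition ppoly (R : realType) (c : R) (a b : bool) : {poly R} :=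
  match a, b with
  | true, true => (c%:P + 'X) ^+ 2
  | false, false => (1 - (c%:P + 'X)) ^+ 2
  | _, _ => (c%:P + 'X) * (1 - (c%:P + 'X))
  end.

Lemma ppolyE (R : realType) (c : R) a b t :
  (ppoly c a b).[t] = pair_pmf (c + t) 0 a b.
Proof.
by case: a; case: b; rewrite /= !hornerE ?mul0r ?addr0 ?subr0 ?mul1r.
Qed.

Lemma sum_pos (R : realType) (N : nat) (i0 : 'I_N) (F : 'I_N -> R) :
  (forall i, 0 < F i) -> 0 < \sum_i F i.
Proof.
move=> H; rewrite (bigD1 i0) //=; apply: ltr_wpDr; last exact: H.
by apply: sumr_ge0 => i _; apply: ltW.
Qed.

Theorem theorem5 (R : realType) (N : nat) (Theta : param R N -> Prop)
  (conv : param R N -> R) :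
  (1 < N)%N ->
  (forall th, Theta th -> Rspace th) ->
  nondegenerate_param Theta ->
  (forall th, 0 <= conv th <= 1) ->
  ~ (exists S : sample N -> R,
       forall th, Theta th -> expect th S = total_corr conv th).
Proof.
move=> N1 HR [p0 [e [e0 Hball]]] _ [S HS].
have N0 : (0 < N)%N by apply: ltn_trans N1.
pose i0 : 'I_N := Ordinal N0.
pose i1 : 'I_N := Ordinal N1.
pose b := if p0 i0 == p0 i1 then (fun i => p0 i + (if i == i0 then e/2 else 0)) else p0.
have hb : forall i, `|b i - p0 i| <= e/2.
  move=> i; rewrite /b; case: ifP => _; last by rewrite subrr normr0; lra.
  rewrite addrAC subrr add0r; case: ifP => _; rewrite ?normr0; last lra.
  rewrite ger0_norm //; lra.
have hb01 : b i0 != b i1.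
  rewrite /b; case: ifP => [/eqP ->|/negbT //].
  rewrite eqxx /=.
  apply/eqP => h; lra.
have Hin : forall t, `|t| < e/4 -> forall i, `|b i + t - p0 i| < 3 * e / 4.
  move=> t ht i; have := hb i.
  rewrite (addrAC _ t); move=> h1; apply: (le_lt_trans (ler_normD _ _)); lra.
pose th (t : R) : param R N := (fun i => b i + t, fun _ => 0).
have HT : forall t, `|t| < e/4 -> Theta (th t).
  move=> t ht; apply: Hball => i /=; have := Hin t ht i; lra.
have Hpos : forall t, `|t| < e/4 -> forall i, 0 < b i + t < 1.
  move=> t ht i.
  have Hm : Theta (fun i => b i + t - e/4, fun _ => 0).
    apply: Hball => j /=; have := Hin t ht j.
    rewrite (addrAC _ (- _)); move=> h1; apply: (le_lt_trans (ler_normD _ _)).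
    rewrite normrN (@ger0_norm _ (e/4)); lra.
  have Hp : Theta (fun i => b i + t + e/4, fun _ => 0).
    apply: Hball => j /=; have := Hin t ht j.
    rewrite (addrAC _ (e/4)); move=> h1; apply: (le_lt_trans (ler_normD _ _)).
    rewrite (@ger0_norm _ (e/4)); lra.
  have [h1 _] := HR _ Hm i; have [h2 _] := HR _ Hp i; move: h1 h2 => /= h1 h2.
  lra.
have Nn0 : (N%:R : R) != 0 by rewrite pnatr_eq0 -lt0n.
have Ngt0 : (0 : R) < N%:R by rewrite ltr0n.
pose m := (\sum_i b i) / N%:R.
have Hmu : forall t, mu (th t) = m + t.
  move=> t; rewrite /mu /= big_split /= sumr_const card_ord /m -mulr_natr.
  by field.
pose EP := \sum_(z : sample N) S z *: \prod_(i < N) ppoly (b i) (z.1 i) (z.2 i).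
pose Ap := \sum_(i < N) ((b i)%:P + 'X) * (1 - ((b i)%:P + 'X)).
pose Dp := (N%:R)%:P * (m%:P + 'X) * (1 - (m%:P + 'X)).
pose Q := EP * Dp - Dp + Ap.
have HQ : forall t, `|t| < e/4 -> Q.[t] = 0.
  move=> t ht.
  have mpos : 0 < m + t.
    rewrite -Hmu /mu divr_gt0 //; apply: (sum_pos i0) => i.
    by have /andP[] := Hpos t ht i.
  have mlt : m + t < 1.
    rewrite -Hmu /mu ltr_pdivrMr // mul1r.
    rewrite -subr_gt0.
    have -> : N%:R - \sum_(i < N) (th t).1 i = \sum_(i < N) (1 - (th t).1 i).
      by rewrite sumrB sumr_const card_ord.
    apply: (sum_pos i0) => i /=; have /andP[_ h] := Hpos t ht i; lra.
  have HEP : expect (th t) S = EP.[t].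
    rewrite /expect /EP horner_sum; apply: eq_bigr => z _.
    rewrite hornerZ horner_prod; congr (_ * _); apply: eq_bigr => i _.
    by rewrite ppolyE.
  have HE : EP.[t] = 1 - (\sum_(i < N) (1 - 0) * (b i + t) * (1 - (b i + t)))
                     / (N%:R * (m + t) * (1 - (m + t))).
    have := HS _ (HT t ht); rewrite /total_corr Hmu mpos mlt HEP; exact.
  have D0 : N%:R * (m + t) * (1 - (m + t)) != 0.
    rewrite !mulf_neq0 //; apply/eqP; lra.
  have HA : Ap.[t] = \sum_(i < N) (1 - 0) * (b i + t) * (1 - (b i + t)).
    rewrite /Ap horner_sum; apply: eq_bigr => i _; rewrite !hornerE; ring.
  have HD : Dp.[t] = N%:R * (m + t) * (1 - (m + t)).
    by rewrite /Dp !hornerE.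
  rewrite /Q !hornerD hornerN hornerM HE HA HD.
  set A := \sum_(i < N) _.
  field; rewrite Nn0 andbT; apply/andP; split; apply/eqP; lra.
have Q0 : Q = 0.
  apply/eqP; apply/negPn/negP => Qn0.
  pose rs := mkseq (fun k : nat => e / 8 / k.+1%:R) (size Q).
  have H1 : all (root Q) rs.
    apply/allP => x /mapP [k _ ->]; apply/rootP; apply: HQ.
    have k1 : (1 : R) <= k.+1%:R by rewrite ler1n.
    have kp : (0 : R) < k.+1%:R by rewrite ltr0n.
    rewrite ger0_norm; last by rewrite divr_ge0 // ?ltW //; lra.
    rewrite ltr_pdivrMr //; nra.
  have H2 : uniq rs.
    apply: mkseq_uniq => k j /= h.
    have e8 : e / 8 != 0 by apply/eqP; lra.
    move/(mulfI e8)/invr_inj/eqP: h; rewrite eqr_nat => /eqP; by case.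
  by have := max_poly_roots Qn0 H1 H2; rewrite size_mkseq ltnn.
have HQm : Q.[- m] = 0 by rewrite Q0 horner0.
have HD : Dp.[- m] = 0 by rewrite /Dp !hornerE; ring.
have HA : Ap.[- m] = \sum_(i < N) ((b i - m) - (b i - m) ^+ 2).
  rewrite /Ap horner_sum; apply: eq_bigr => i _; rewrite !hornerE; ring.
move: HQm; rewrite /Q !hornerD hornerN hornerM HD HA mulr0 subrr add0r => HA0.
have Hs : \sum_(i < N) (b i - m) = 0.
  rewrite sumrB sumr_const card_ord /m -(mulr_natr ((\sum_i b i) / N%:R) N).
  by field.
have Hsq : \sum_(i < N) (b i - m) ^+ 2 = 0.
  have : \sum_(i < N) ((b i - m) - (b i - m) ^+ 2) = 0.
    exact: HA0.
  by rewrite sumrB Hs sub0r => /eqP; rewrite oppr_eq0 => /eqP.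
have := psumr_eq0P (fun i _ => sqr_ge0 (b i - m)) Hsq.
move=> H; move: (H i0 isT) (H i1 isT) => /eqP; rewrite sqrf_eq0 subr_eq0 => /eqP h0.
move/eqP; rewrite sqrf_eq0 subr_eq0 => /eqP h1.
by move: hb01; rewrite h0 h1 eqxx.
Qed.
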